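(* Let $p\ge 1$ be an integer, put $m:=2p+1$, and let $\theta:=e^{-\pi i/4}$. For $k=0,1,\dots,4p+1$ let $y_k:=-1+\frac{2k}{4p+1}$ and $\mu_k:=H(y_k)$, where $$H(y):=\int_{\mathbb{R}}\frac{e^{-2\pi x^2+2\pi\theta x y}}{\cosh(\pi\theta x)}\,dx=\frac{1}{\cos(\pi y)}\Big[\sqrt{2}\cos(\pi y/2)\,e^{-\frac{\pi i}{8}(4y^2+1)}-e^{-\frac{\pi i}{4}}\Big].$$ Let $L$ be the linear functional on the space of complex polynomials of degree at most $4p+1$ defined by $L[x^k]=\mu_k$ for $k=0,1,\dots,4p+1$. Let $P_{-1}\equiv 0$, $P_0\equiv 1$, and $P_{n+1}(x)=(x-a_n)P_n(x)-b_nP_{n-1}(x)$ for $n=0,1,\dots,m-1$, where $a_n=L[xP_n^2]/L[P_n^2]$ and $b_n=L[P_n^2]/L[P_{n-1}^2]$ (with $b_0$ arbitrary), and assume that $L[P_n^2]\neq 0$ for $0\le n\le m-1$, so that these monic polynomials are well defined; they satisfy $\deg P_n=n$ and $L[P_nQ]=0$ for every polynomial $Q$ of degree at most $n-1$, $1\le n\le m$. Then the polynomial $P_m$ satisfies $P_m(x)=-x^mP_m(1/x)$ for all $x\neq 0$.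
   Context: $\cosh$ and $\cos$ are the usual complex hyperbolic cosine and cosine; note $y_k\neq\pm 1/2$ for all $k$, so $\mu_k$ is well defined. The polynomials $P_n$ are the monic orthogonal polynomials with respect to the (generally non-positive) functional $L$. *)

(* Defs.v *)
From HB Require Import structures.
From mathcomp Require Import all_boot all_order all_algebra.
From mathcomp Require Import complex.
From mathcomp Require Import reals trigo.
Set Implicit Arguments. Unset Strict Implicit. Unset Printing Implicit Defensive.
Import Order.TTheory GRing.Theory Num.Theory.
Local Open Scope ring_scope.
Local Open Scope complex_scope.

Section Defs.
Variable R : realType.

Definition cexpi (t : R) : R[i] := (cos t +i* sin t)%C.

Definition yk (p k : nat) : R := -1 + (2 * k%:R) / (4 * p%:R + 1).

Definition Hc (y : R) : R[i] :=
  ((cos (pi * y))^-1)%:C *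
  ((Num.sqrt 2 * cos (pi * y / 2))%:C * cexpi (- (pi * (4 * y ^+ 2 + 1) / 8))
   - cexpi (- (pi / 4))).

Definition mu (p k : nat) : R[i] := Hc (yk p k).

(* L[Q] = sum_k Q_k mu_k  (only applied to polynomials of degree <= 4p+1) *)
Definition Lfun (p : nat) (Q : {poly R[i]}) : R[i] :=
  \sum_(k < size Q) Q`_k * mu p k.

Fixpoint Ppair (p : nat) (n : nat) : {poly R[i]} * {poly R[i]} :=
  match n with
  | 0 => (0, 1)
  | n'.+1 =>
      let: (Pm1, Pn) := Ppair p n' in
      let an := Lfun p ('X * Pn ^+ 2) / Lfun p (Pn ^+ 2) in
      let bn := if n' is 0 then 0 else Lfun p (Pn ^+ 2) / Lfun p (Pm1 ^+ 2) in
      (Pn, ('X - an%:P) * Pn - bn%:P * Pm1)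
  end.

Definition Pn (p n : nat) : {poly R[i]} := (Ppair p n).2.

End Defs.

(* Main.v *)
Require Import Defs.
From HB Require Import structures.
From mathcomp Require Import all_boot all_order all_algebra all_fingroup.
From mathcomp Require Import complex.
From mathcomp Require Import reals trigo.
From mathcomp Require Import ring lra zify.
Import Order.TTheory GRing.Theory Num.Theory.
Local Open Scope ring_scope.

Section S.
Variable R : realType.
Variable p : nat.
Local Notation C := (R[i]).
Local Notation L := (@Lfun R p).

Lemma Lgen (Q : {poly C}) n : (size Q <= n)%N ->
  L Q = \sum_(k < n) Q`_k * mu R p k.
Proof.
move=> hn; rewrite /Lfun (big_ord_widen n (fun k => Q`_k * mu R p k) hn) big_mkcond /=.
apply: eq_bigr => k _; case: ifP => // /negbT; rewrite -leqNgt => hk.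
by rewrite nth_default // mul0r.
Qed.

Lemma LD (Q S : {poly C}) : L (Q + S) = L Q + L S.
Proof.
rewrite (@Lgen (Q + S) (size Q + size S)); last first.
  by apply: leq_trans (size_polyD _ _) _; rewrite geq_max leq_addr leq_addl.
rewrite (@Lgen Q (size Q + size S)) ?leq_addr // (@Lgen S (size Q + size S)) ?leq_addl //.
by rewrite -big_split /=; apply: eq_bigr => k _; rewrite coefD mulrDl.
Qed.

Lemma LZ (c : C) (Q : {poly C}) : L (c *: Q) = c * L Q.
Proof.
rewrite (@Lgen (c *: Q) (size Q)); last exact: size_scale_leq.
rewrite /Lfun mulr_sumr.
by apply: eq_bigr => k _; rewrite coefZ -mulrA.
Qed.

Lemma L0 : L 0 = 0.
Proof. by rewrite /Lfun size_poly0 big_ord0. Qed.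

Lemma LN (Q : {poly C}) : L (- Q) = - L Q.
Proof. by rewrite -scaleN1r LZ mulN1r. Qed.

Lemma LB (Q S : {poly C}) : L (Q - S) = L Q - L S.
Proof. by rewrite LD LN. Qed.

Lemma Lsum (I : Type) (r : seq I) (F : I -> {poly C}) :
  L (\sum_(i <- r) F i) = \sum_(i <- r) L (F i).
Proof. exact: (big_morph L LD L0). Qed.

Lemma LXn n : L 'X^n = mu R p n.
Proof.
rewrite /Lfun size_polyXn big_ord_recr /= coefXn eqxx mul1r big1 ?add0r //.
by move=> i _; rewrite coefXn (ltn_eqF (ltn_ord i)) mul0r.
Qed.

Lemma LXmul (Q : {poly C}) n j : (size Q <= n)%N ->
  L (Q * 'X^j) = \sum_(k < n) Q`_k * mu R p (k + j).
Proof.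
move=> hn.
have hQ : Q = \poly_(k < n) Q`_k.
  apply/polyP => i; rewrite coef_poly; case: ifP => // /negbT.
  by rewrite -leqNgt => hi; rewrite nth_default // (leq_trans hn hi).
rewrite {1}hQ poly_def mulr_suml Lsum; apply: eq_bigr => k _.
by rewrite -scalerAl -exprD LZ LXn.
Qed.

Lemma mu_sym k : (k <= 4 * p + 1)%N -> mu R p (4 * p + 1 - k) = mu R p k.
Proof.
move=> hk.
have hy : yk R p (4 * p + 1 - k) = - yk R p k.
  rewrite /yk natrB // natrD natrM /=.
  have hN : (4 * p%:R + 1 : R) != 0.
    by rewrite gt_eqF // ltr_pwDr // mulr_ge0 // ler0n.
  field; exact: hN.
rewrite /mu hy /Hc; set y := yk R p k.
by rewrite mulrN cosN sqrrN mulNr cosN.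
Qed.


Definition orth n (Q : {poly C}) :=
  forall g : {poly C}, (size g <= n)%N -> L (Q * g) = 0.

Lemma sub_lead (P g : {poly C}) n : P \is monic -> size P = n.+1 ->
  (size g <= n.+1)%N -> (size (g - g`_n *: P)%R <= n)%N.
Proof.
move=> hm hs hg; apply/leq_sizeP => j hj; rewrite coefB coefZ.
case: (ltngtP j n) => [|hjn|->].
- by rewrite ltnNge hj.
- have h1 : (size g <= j)%N := leq_trans hg hjn.
  have h2 : (size P <= j)%N by rewrite hs.
  by rewrite (nth_default _ h1) (nth_default _ h2) mulr0 subr0.
- have hl : P`_n = 1 by move/monicP: hm; rewrite lead_coefE hs.
  by rewrite hl mulr1 subrr.
Qed.

Arguments sub_lead [P g n].

Lemma orth_lead (P g : {poly C}) n : P \is monic -> size P = n.+1 -> orth n P ->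
  (size g <= n.+1)%N -> L (P * g) = g`_n * L (P * P).
Proof.
move=> hm hs ho hg.
have -> : P * g = P * (g - g`_n *: P) + g`_n *: (P * P).
  by rewrite mulrBr scalerAr subrK.
by rewrite LD ho ?add0r ?LZ //; apply: sub_lead.
Qed.

Arguments orth_lead [P g n].

Lemma size_Xmul (h : {poly C}) n : (size h <= n)%N -> (size ('X * h)%R <= n.+1)%N.
Proof.
move=> hh; apply/leq_sizeP => j hj; rewrite coefXM.
case: j hj => // j hj /=; rewrite nth_default //; exact: leq_trans hh hj.
Qed.

Arguments size_Xmul [h n].

Lemma step n (P Pm : {poly C}) b :
  P \is monic -> size P = n.+1 -> orth n P -> L (P ^+ 2) != 0 ->
  (n = 0%N /\ Pm = 0) \/
  (exists k, [/\ n = k.+1, Pm \is monic, size Pm = n & orth k Pm] /\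
     (L (Pm ^+ 2) != 0 /\ b = L (P ^+ 2) / L (Pm ^+ 2))) ->
  [/\ ('X - (L ('X * P ^+ 2) / L (P ^+ 2))%:P) * P - b%:P * Pm \is monic,
      size (('X - (L ('X * P ^+ 2) / L (P ^+ 2))%:P) * P - b%:P * Pm) = n.+2 &
      orth n.+1 (('X - (L ('X * P ^+ 2) / L (P ^+ 2))%:P) * P - b%:P * Pm)].
Proof.
move=> hm hs ho hL2 hc.
set a := L ('X * P ^+ 2) / L (P ^+ 2).
set P' := _ - _.
have hPm : (size Pm <= n)%N.
  by case: hc => [[_ ->]|[k [[_ _ -> _] _]]]; rewrite ?size_poly0.
have hm1 : ('X - a%:P) * P \is monic by rewrite monicMl ?monicXsubC.
have hs1 : size (('X - a%:P) * P) = n.+2.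
  by rewrite size_monicM ?monicXsubC ?monic_neq0 // size_XsubC hs.
have hs2 : (size (- (b%:P * Pm))%R < size (('X - a%:P) * P)%R)%N.
  rewrite size_polyN mul_polyC hs1; apply: leq_ltn_trans (size_scale_leq _ _) _.
  by apply: leq_trans hPm _.
split.
- by rewrite monicE /P' lead_coefDl // -monicE.
- by rewrite /P' size_polyDl.
move=> g hg.
have hP : L (P' * P) = 0.
  have -> : P' * P = 'X * P ^+ 2 - a *: (P ^+ 2) - b *: (P * Pm).
    by rewrite /P' -!mul_polyC; ring.
  by rewrite !LB !LZ (ho Pm hPm) mulr0 subr0 /a divfK // subrr.
have -> : P' * g = g`_n *: (P' * P) + P' * (g - g`_n *: P).
  by rewrite mulrBr scalerAr addrC subrK.
rewrite LD LZ hP mulr0 add0r.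
have hh := sub_lead hm hs hg; set h := g - _ in hh *.
have -> : P' * h = P * ('X * h) - a *: (P * h) - b *: (Pm * h).
  by rewrite /P' -!mul_polyC; ring.
rewrite !LB !LZ (ho h hh) mulr0 subr0.
case: hc => [[n0 ->]|[k [[nk hm' hs' ho'] [hL' ->]]]].
  by move: hh; rewrite n0 leqn0 size_poly_eq0 => /eqP ->; rewrite !mulr0 L0 mulr0 subr0.
subst n.
rewrite (orth_lead hm hs ho (size_Xmul hh)) (orth_lead hm' hs' ho' hh) coefXM /=.
rewrite -!expr2; field; exact: hL'.
Qed.


Lemma Ppair_S n : Ppair R p n.+1 =
  (Pn R p n, ('X - (L ('X * Pn R p n ^+ 2) / L (Pn R p n ^+ 2))%:P) * Pn R p n
     - (if n is 0 then 0 else L (Pn R p n ^+ 2) / L ((Ppair R p n).1 ^+ 2))%:P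
       * (Ppair R p n).1).
Proof. by rewrite /Pn /=; case: (Ppair R p n). Qed.

Variable hL : forall n : nat, (n < 2 * p + 1)%N -> L (Pn R p n ^+ 2) != 0.

Lemma Pn_prop n : (n <= 2 * p + 1)%N ->
  [/\ Pn R p n \is monic, size (Pn R p n) = n.+1 & orth n (Pn R p n)].
Proof.
elim/ltn_ind: n => -[_ _|n IH hn].
  split; first exact: monic1.
    by rewrite /Pn /= size_poly1.
  by move=> g; rewrite leqn0 size_poly_eq0 => /eqP ->; rewrite mulr0 L0.
have [h1 h2 h3] := IH n (ltnSn n) (ltnW hn).
have -> : Pn R p n.+1 = (Ppair R p n.+1).2 by [].
rewrite Ppair_S /=.
apply: step => //; first exact: hL _ hn.
case: n IH hn h1 h2 h3 => [|k] IH hn h1 h2 h3; first by left.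
right; exists k; rewrite Ppair_S /=.
have [g1 g2 g3] := IH k (ltnW (ltnSn _)) (ltnW (ltnW hn)).
split => //; split => //; apply: hL; exact: ltnW hn.
Qed.

Lemma nondeg (f : {poly C}) : (size f <= 2 * p + 1)%N ->
  (forall g : {poly C}, (size g <= 2 * p + 1)%N -> L (f * g) = 0) -> f = 0.
Proof.
move=> hf ho; case: (eqVneq f 0) => // nz; exfalso.
have hs : size f = (size f).-1.+1 by rewrite prednK // size_poly_gt0.
have hd : ((size f).-1 < 2 * p + 1)%N by rewrite -hs.
have [m1 s1 o1] := Pn_prop _ (ltnW hd).
have := ho (Pn R p (size f).-1); rewrite s1 => /(_ hd).
rewrite mulrC (orth_lead m1 s1 o1) -?hs //.
move/eqP; rewrite mulf_eq0 -expr2 (negbTE (hL _ hd)) orbF.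
by rewrite -lead_coefE lead_coef_eq0 (negbTE nz).
Qed.


Lemma orth_X n (F : {poly C}) :
  (forall i, (i < n)%N -> L (F * 'X^i) = 0) -> orth n F.
Proof.
move=> h g hg.
have hQ : g = \poly_(k < n) g`_k.
  apply/polyP => i; rewrite coef_poly; case: ifP => // /negbT.
  by rewrite -leqNgt => hi; rewrite nth_default // (leq_trans hg hi).
rewrite hQ poly_def mulr_sumr Lsum big1 // => i _.
by rewrite -scalerAr LZ h ?mulr0.
Qed.

Local Notation m := (2 * p + 1)%N.
Local Notation P := (Pn R p m).
Lemma aux1 (a b : nat) : (a < m)%N -> (b < m)%N -> (a + b < 4 * p + 1)%N.
Proof. move=> h1 h2. clear hL. lia. Qed.
Lemma aux2 (a b e : nat) : e = m -> (a < m)%N -> (b < m)%N ->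
  (4 * p + 1 - (a + b).+1 = e - a.+1 + (e - b.+1))%N.
Proof. move=> -> h1 h2. clear hL. lia. Qed.

Lemma Pm_prop : [/\ P \is monic, size P = m.+1 & orth m P].
Proof. exact: Pn_prop. Qed.

Lemma sizeP1 : (size P).-1 = m.
Proof. by case: Pm_prop => _ -> _. Qed.

Lemma orth_sum i : (i < (size P).-1)%N ->
  \sum_(k < (size P).-1) P`_k * mu R p (k + i) + mu R p ((size P).-1 + i) = 0.
Proof.
case: Pm_prop => hm hs ho hi.
have hi' := hi; rewrite sizeP1 in hi'.
have := ho 'X^i; rewrite size_polyXn => /(_ hi').
have hle : (size P <= (size P).-1.+1)%N by rewrite hs.
rewrite (@LXmul P (size P).-1.+1 i hle).
rewrite big_ord_recr /=.
have -> : P`_(size P).-1 = 1 by move/monicP: hm; rewrite lead_coefE.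
by rewrite mul1r.
Qed.

Local Notation d := (size P).-1.

Definition Amx : 'M[C]_d := \matrix_(i < d, j < d) mu R p (i + j).
Definition Bmx : 'M[C]_d := \matrix_(i < d, j < d) mu R p (i + j).+1.

Lemma detA : \det Amx != 0.
Proof.
apply/det0P => -[v nz hv].
have hd0 : (0 < d)%N by rewrite sizeP1 addn1.
pose k0 : 'I_d := Ordinal hd0.
have e : forall k : 'I_d, insubd k0 (val k) = k.
  by move=> k; apply: val_inj; rewrite insubdK //; exact: ltn_ord.
pose f : {poly C} := \poly_(k < d) v 0 (insubd k0 k).
have hf : f = 0.
  apply: nondeg; first by rewrite -sizeP1 size_poly.
  apply: orth_X => j hj; rewrite -sizeP1 in hj.
  rewrite (@LXmul f d j (size_poly _ _)).
  transitivity ((v *m Amx) 0 (Ordinal hj)); last by rewrite hv mxE.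
  rewrite !mxE; apply: eq_bigr => k _.
  by rewrite coef_poly ltn_ord e !mxE.
move/eqP: nz; apply; apply/rowP => k.
have := congr1 (fun q : {poly C} => q`_k) hf.
by rewrite coef_poly ltn_ord e coef0 !mxE.
Qed.

Lemma BA : \det Bmx = \det Amx.
Proof.
pose s : {perm 'I_d} := perm (@rev_ord_inj d).
have -> : Bmx = row_perm s (col_perm s Amx).
  apply/matrixP => i j; rewrite !mxE !permE /=.
  have hi : (i < m)%N := leq_trans (ltn_ord i) (eq_leq sizeP1).
  have hj : (j < m)%N := leq_trans (ltn_ord j) (eq_leq sizeP1).
  by rewrite -mu_sym ?aux1 // (aux2 _ _ _ sizeP1).
rewrite row_permE col_permE !det_mulmx !det_perm odd_permV.
by rewrite mulrCA -signr_addb addbb expr0 mulr1.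
Qed.

Lemma BAM : Bmx = Amx *m (companionmx P)^T.
Proof.
apply/matrixP => i j; rewrite !mxE.
under eq_bigr => k _ do rewrite !mxE.
case: eqP => hj.
  have hd : (0 < d)%N by rewrite sizeP1 addn1.
  have -> : (i + j).+1 = (d + i)%N by rewrite hj -addnS prednK // addnC.
  have := orth_sum _ (ltn_ord i); move/eqP; rewrite addrC addr_eq0 => /eqP ->.
  rewrite -sumrN; apply: eq_bigr => k _.
  by rewrite mulrN mulrC addnC.
have hj1 : (j.+1 < d)%N.
  rewrite ltn_neqAle (ltn_ord j) andbT; apply/eqP => e; exact: hj (congr1 predn e).
rewrite (bigD1 (Ordinal hj1)) //= eqxx mulr1 big1; first by rewrite addr0; congr (mu R p _); exact: esym (addnS i j).
move=> k hk.
rewrite (_ : (j.+1 == k) = false) ?mulr0 //; apply/negbTE; apply: contra hk => /eqP e.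
by apply/eqP; apply: val_inj; rewrite /= e.
Qed.

Lemma det_comp : \det (companionmx P) = (-1) ^+ d * P`_0.
Proof.
case: Pm_prop => hm _ _.
have := char_poly_det (companionmx P); rewrite companionmxK // => ->.
by rewrite mulrA -expr2 sqrr_sign mul1r.
Qed.

Lemma P0 : P`_0 = -1.
Proof.
have h1 : \det Amx * \det (companionmx P) = \det Amx.
  by rewrite -(det_tr (companionmx P)) -det_mulmx -BAM BA.
have h2 : \det (companionmx P) = 1.
  apply/eqP; rewrite -subr_eq0; apply/eqP.
  apply: (mulfI detA); rewrite mulrBr h1 mulr1 mulr0 subrr //.
move: h2; rewrite det_comp sizeP1 -signr_odd.
have -> : odd m by rewrite addn1 /= oddM.
by rewrite expr1 mulN1r => /eqP; rewrite eqr_oppLR => /eqP.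
Qed.



Lemma aux3 (k i : nat) : (k < m.+1)%N -> (i < m)%N ->
  (k + (m.-1 - i) <= 4 * p + 1)%N /\
  (4 * p + 1 - (k + (m.-1 - i)) = m - k + i)%N.
Proof. move=> h1 h2; clear hL; split; lia. Qed.

Lemma Prev : \poly_(j < m.+1) (- P`_(m - j)) = P.
Proof.
case: Pm_prop => hm hs ho.
have hPm : P`_m = 1 by move/monicP: hm; rewrite lead_coefE hs.
apply/eqP; rewrite -subr_eq0; apply/eqP; apply: nondeg.
  apply/leq_sizeP => j hj; rewrite coefB coef_poly.
  move: hj; rewrite leq_eqVlt => /orP [/eqP <-|hjm].
  - by rewrite ltnSn subnn P0 opprK hPm subrr.
  - have h2 : (size P <= j)%N by rewrite hs.
    by rewrite ltnNge hjm /= (nth_default _ h2) subrr.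
apply: orth_X => i hi.
have hXi : (size ('X^i : {poly C}) <= m)%N by rewrite size_polyXn.
rewrite mulrBl LB (ho _ hXi) subr0.
rewrite (@LXmul _ m.+1 i (size_poly _ _)).
have hXj : (size ('X^(m.-1 - i) : {poly C}) <= m)%N.
  by rewrite size_polyXn; clear hL; lia.
have := ho _ hXj.
have hle : (size P <= m.+1)%N by rewrite hs.
rewrite (@LXmul P m.+1 _ hle) => h0.
rewrite (reindex_inj rev_ord_inj) /=.
transitivity (- \sum_(k < m.+1) P`_k * mu R p (k + (m.-1 - i))); last by rewrite h0 oppr0.
rewrite -sumrN; apply: eq_bigr => k _.
have hk := ltn_ord k.
have [a1 a2] := aux3 _ _ hk hi.
have hk' : (k <= m)%N by rewrite -ltnS.
rewrite subSS coef_poly ltnS leq_subr (subKn hk') mulNr.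
by rewrite -(mu_sym _ a1) a2.
Qed.

End S.

Theorem proposition1 (R : realType) (p : nat) (hp : (1 <= p)%N) :
  (forall n : nat, (n < 2 * p + 1)%N -> Lfun p (Pn R p n ^+ 2) != 0) ->
  forall x : R[i], x != 0 ->
    (Pn R p (2 * p + 1)).[x] = - x ^+ (2 * p + 1) * (Pn R p (2 * p + 1)).[x^-1].
Proof.
move=> hL x hx.
have [hm hs ho] := @Pm_prop R p hL.
rewrite -{1}(@Prev R p hL) horner_poly (@horner_coef_wide _ (2 * p + 1).+1); last by rewrite hs.
rewrite mulr_sumr (reindex_inj rev_ord_inj) /=.
apply: eq_bigr => k _.
have hk : (k <= 2 * p + 1)%N by rewrite -ltnS.
have e : x ^+ (2 * p + 1) = x ^+ (2 * p + 1 - k) * x ^+ k by rewrite -exprD subnK.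
rewrite subSS (subKn hk) exprVn e.
have hx1 : x ^+ (2 * p + 1 - k) != 0 by rewrite expf_neq0.
have hx2 : x ^+ k != 0 by rewrite expf_neq0.
by field.
Qed.
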